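(* For every $\sigma\in\Sigma$ there exist $B\in\mathbb{N}$ and a deck $\beta_1,\ldots,\beta_B\in\mathscr{B}$ such that $T^*_i(\beta_1,\ldots,\beta_B)\ge1$ for all $i\in\mathcal{N}$ and $T^\sigma(\beta_1,\ldots,\beta_B)=T^*(\beta_1,\ldots,\beta_B)$.
   Context: A ballot style consists of contests $\mathcal{C}=\{1,\ldots,C\}$, candidates $\mathcal{N}=\{1,\ldots,N\}$ partitioned into nonempty sets $\mathcal{N}_c$ ($c\in\mathcal{C}$), and positive integers $v_c$. A filled-out ballot is a subset $\beta\subseteq\mathcal{N}$; $\mathscr{B}=\{\beta\subseteq\mathcal{N}: |\mathcal{N}_c\cap\beta|\le v_c\ \forall c\}$. For $i\in\mathcal{N}_c$: $T^*_i(\beta_1,\ldots,\beta_B)=\sum_{b=1}^B\mathbb{I}\{i\in\beta_b\text{ and }|\mathcal{N}_c\cap\beta_b|\le v_c\}$, and for a bijection $\sigma$ of $\mathcal{N}$, $T^\sigma_i(\beta_1,\ldots,\beta_B)=\sum_{b=1}^B\mathbb{I}\{\sigma(i)\in\beta_b\text{ and }|\{\sigma(j)\in\beta_b: j\in\mathcal{N}_c\}|\le v_c\}$. $\Sigma$ is the set of non-identity bijections $\mathcal{N}\to\mathcal{N}$. *)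

(* Defs.v *)
From mathcomp Require Import all_boot all_order all_fingroup.
Set Implicit Arguments. Unset Strict Implicit. Unset Printing Implicit Defensive.

(* A ballot style: contests 'I_C, candidates 'I_N; [con i] is the contest
   containing candidate i (so N_c = [set i | con i == c]); [v c] is the
   number of votes allowed in contest c. *)
Definition contest_set (C N : nat) (con : 'I_N -> 'I_C) (c : 'I_C) : {set 'I_N} :=
  [set j | con j == c].

Definition ballot_style (C N : nat) (con : 'I_N -> 'I_C) (v : 'I_C -> nat) : Prop :=
  (forall c, contest_set con c != set0) /\ (forall c, 0 < v c).

Definition valid_ballot (C N : nat) (con : 'I_N -> 'I_C) (v : 'I_C -> nat)
  (beta : {set 'I_N}) : bool :=
  [forall c, #|contest_set con c :&: beta| <= v c].

Definition Tstar (C N : nat) (con : 'I_N -> 'I_C) (v : 'I_C -> nat)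
  (B : nat) (deck : 'I_B -> {set 'I_N}) (i : 'I_N) : nat :=
  \sum_(b < B) ((i \in deck b) && (#|contest_set con (con i) :&: deck b| <= v (con i))).

Definition Tsigma (C N : nat) (con : 'I_N -> 'I_C) (v : 'I_C -> nat)
  (sigma : {perm 'I_N}) (B : nat) (deck : 'I_B -> {set 'I_N}) (i : 'I_N) : nat :=
  \sum_(b < B) ((sigma i \in deck b) &&
     (#|[set j in contest_set con (con i) | sigma j \in deck b]| <= v (con i))).

(* Main.v *)
Require Import Defs.
From mathcomp Require Import all_boot all_order all_fingroup.

Theorem proposition6 (C N : nat) (con : 'I_N -> 'I_C) (v : 'I_C -> nat)
  (Hstyle : ballot_style con v) (sigma : {perm 'I_N}) (Hsigma : sigma != 1%g) :
  exists (B : nat) (deck : 'I_B -> {set 'I_N}),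
    (forall b, valid_ballot con v (deck b)) /\
    (forall i, 1 <= Tstar con v deck i) /\
    (forall i, Tsigma con v sigma deck i = Tstar con v deck i).
Proof.
  case: Hstyle => _ Hv.
  have c1 : forall (A : {set 'I_N}) k, #|A :&: [set k]| <= 1.
    by move=> A k; rewrite -(cards1 k); apply: subset_leq_card; apply: subsetIr.
  have vv : forall c, 1 <= v c by [].
  have HT : forall i, Tstar con v (fun b : 'I_N => [set b]) i = 1.
    move=> i; rewrite /Tstar (bigD1 i) //= in_set1 eqxx /=.
    rewrite (leq_trans (c1 _ _) (vv _)) big1 // => j /negbTE ji.
    by rewrite in_set1 eq_sym ji.
  exists N, (fun b => [set b]); split; [|split].
  - move=> b; apply/forallP => c; exact: leq_trans (c1 _ _) (vv _).
  - by move=> i; rewrite HT.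
  - move=> i; rewrite HT /Tsigma (bigD1 (sigma i)) //= in_set1 eqxx /=.
    have -> : #|[set j in contest_set con (con i) | sigma j \in [set sigma i]]| <= v (con i).
      apply: leq_trans (vv (con i)); rewrite -(cards1 i); apply: subset_leq_card.
      apply/subsetP => j; rewrite !inE => /andP [_ /eqP /perm_inj ->]; by [].
    rewrite big1 // => j /negbTE ji.
    by rewrite in_set1 eq_sym ji.
Qed.
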